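(* Let $k,m\in\mathbb{N}$ with $k>m$, $k$ even, $\frac{2k+1}{4m}<1$ and $\gcd(4m,2k+1)=1$. For $s=0,\dots,4m-1$ and $n=0,\dots,2k$ put $\widetilde X_{sn}=\frac{s}{4m}-\frac{n}{2k+1}$ and $\widetilde\Phi_{sn}(0,0)=\sum_{l\in\mathbb{Z}}Q_2\big(2(l+\widetilde X_{sn})\big)$ with $Q_2(x)=(1-|x|)\chi_{[-1,1]}(x)$. Let $\widetilde A$ be the $(2m-1)\times k$ matrix with entries $\widetilde A_{sn}=\widetilde\Phi_{sn}(0,0)-\widetilde\Phi_{s,2k+1-n}(0,0)$, $s=1,\dots,2m-1$, $n=1,\dots,k$. Then $\operatorname{rank}(\widetilde A)\le k-1$.
   Context: This corresponds to the Gabor system of $Q_2$ with $a=\frac{1}{2m}$, $b=\frac{2k+1}{2}$, $ab=\frac{2k+1}{4m}$. *)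

(* Defs.v *)
From HB Require Import structures.
From mathcomp Require Import all_boot all_order all_algebra.
From mathcomp Require Import all_classical all_reals all_analysis.
Set Implicit Arguments. Unset Strict Implicit. Unset Printing Implicit Defensive.
Import Order.TTheory GRing.Theory Num.Theory.
Local Open Scope ring_scope.

Definition Q2 (R : realType) (x : R) : R :=
  if `|x| <= 1 then 1 - `|x| else 0.

Definition sumZ (R : realType) (f : int -> R) : R :=
  limn (fun N : nat => \sum_(i < (2 * N).+1) f (i%:Z - N%:Z)%R).

Definition Xt (R : realType) (k m s n : nat) : R :=
  s%:R / (4 * m)%:R - n%:R / (2 * k + 1)%:R.

Definition Phit (R : realType) (k m s n : nat) : R :=
  sumZ (fun l : int => @Q2 R (2 * (l%:~R + @Xt R k m s n))).

(* tilde A_{sn} = Phi_{sn} - Phi_{s,2k+1-n}, s = 1..2m-1, n = 1..k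
   (row index i : 'I_(2m-1) stands for s = i+1, column j : 'I_k for n = j+1) *)
Definition At (R : realType) (k m : nat) : 'M[R]_((2 * m).-1, k) :=
  \matrix_(i < (2 * m).-1, j < k)
     (@Phit R k m i.+1 j.+1 - @Phit R k m i.+1 ((2 * k).+1 - j.+1)).

(* Main.v *)
Set Warnings "-all".
Require Import Defs.
From HB Require Import structures.
From mathcomp Require Import all_boot all_order all_algebra.
From mathcomp Require Import all_classical all_reals all_analysis.
From mathcomp Require Import zify ring lra.
Import Order.TTheory GRing.Theory Num.Theory.
Local Open Scope ring_scope.

Section S.
Variable R : realType.

Lemma sumZ_fin (f : int -> R) :
  (forall l : int, 2 <= `|l| -> f l = 0) -> sumZ f = f (-1) + f 0 + f 1.
Proof.
move=> f0.
pose S N := \sum_(i < (2 * N).+1) f (i%:Z - N%:Z).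
have rec N : S N.+1 = S N + f (- (N.+1)%:Z) + f (N.+1)%:Z.
  rewrite /S mulnSr addn2 big_ord_recr big_ord_recl /=.
  congr (_ + _); last by congr f; lia.
  rewrite addrC; congr (_ + _); last by rewrite sub0r.
  apply: eq_bigr => i _ /=; congr f.
  rewrite /bump /= add1n; lia.
have cst N : (1 <= N)%N -> S N = f (-1) + f 0 + f 1.
  elim: N => // -[|N] IH _.
    by rewrite /S /= !big_ord_recr big_ord0 /= add0r.
  have z1 : f (- (N.+2)%:Z) = 0 by apply: f0; rewrite normrN /=; lia.
  have z2 : f (N.+2)%:Z = 0 by apply: f0; rewrite /=; lia.
  by rewrite rec IH // z1 z2 !addr0.
rewrite /sumZ -/S.
apply: (@lim_near_cst _ (@norm_hausdorff _ _) nat (\oo)%classic _ (f (-1) + f 0 + f 1) S).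
  by exists 1%N => // N /= hN; exact: cst.
Qed.

Lemma Q2_0 (x : R) : 1 <= `|x| -> Q2 x = 0.
Proof. rewrite /Q2 le_eqVlt => /orP[/eqP<-|h]; first by rewrite lexx subrr.
by rewrite leNgt h. Qed.
Lemma Q2_pos (x : R) : 0 <= x -> x <= 1 -> Q2 x = 1 - x.
Proof. by move=> h0 h1; rewrite /Q2 ger0_norm // h1. Qed.
Lemma Q2_neg (x : R) : x <= 0 -> -1 <= x -> Q2 x = 1 + x.
Proof. move=> h0 h1; rewrite /Q2 ler0_norm // ifT ?opprK //; lra. Qed.

Definition Hf (X : R) := Q2 (2 * (X - 1)) + Q2 (2 * X) + Q2 (2 * (X + 1)).

Lemma Q2_0l (x : R) : x <= -1 -> Q2 x = 0.
Proof. move=> h; apply: Q2_0; rewrite ler_normr; apply/orP; right; lra. Qed.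
Lemma Q2_0r (x : R) : 1 <= x -> Q2 x = 0.
Proof. move=> h; apply: Q2_0; rewrite ler_normr; apply/orP; left; lra. Qed.

Lemma H1 X : 0 <= X -> X <= 1/2 -> Hf X = 1 - 2 * X.
Proof.
move=> a b; rewrite /Hf (@Q2_0l (2 * (X - 1))); last lra.
rewrite (@Q2_pos (2 * X)); try lra.
rewrite (@Q2_0r (2 * (X + 1))); lra.
Qed.
Lemma H2 X : -(1/2) <= X -> X <= 0 -> Hf X = 1 + 2 * X.
Proof.
move=> a b; rewrite /Hf (@Q2_0l (2 * (X - 1))); last lra.
rewrite (@Q2_neg (2 * X)); try lra.
rewrite (@Q2_0r (2 * (X + 1))); lra.
Qed.
Lemma H3 X : -1 <= X -> X <= -(1/2) -> Hf X = -1 - 2 * X.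
Proof.
move=> a b; rewrite /Hf (@Q2_0l (2 * (X - 1))); last lra.
rewrite (@Q2_0l (2 * X)); last lra.
rewrite (@Q2_pos (2 * (X + 1))); lra.
Qed.

Definition D (y x : R) := Hf (y - x) - Hf (y - (1 - x)).

Ltac hv u := first [ have ->: Hf u = 1 - 2*u by apply: H1; lra
  | have ->: Hf u = 1 + 2*u by apply: H2; lra
  | have ->: Hf u = -1 - 2*u by apply: H3; lra ].

Lemma D_sym y x : 0 < x < 1/2 -> 0 < y < 1/2 -> D y x = D (1/2 - y) x.
Proof.
move=> /andP[x0 x1] /andP[y0 y1]; rewrite /D.
case: (lerP x y) => h1; case: (lerP (x + y) (1/2)) => h2;
 hv (y - x); hv (y - (1 - x)); hv (1/2 - y - x); hv (1/2 - y - (1 - x)); lra.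
Qed.

Lemma Phit_eq k m s n : -1 < Xt R k m s n < 1 -> Phit R k m s n = Hf (Xt R k m s n).
Proof.
move=> /andP[a b]; rewrite /Phit sumZ_fin.
  by rewrite /Hf (intrN R 1) add0r !(addrC _ (Xt R k m s n)).
move=> l hl.
have : 2 <= `|(l%:~R : R)|.
  by rewrite -intr_norm (_ : 2 = (2:int)%:~R) // ler_int.
rewrite ler_normr => /orP[h|h].
  apply: Q2_0r; lra.
apply: Q2_0l; lra.
Qed.

Definition E k m s n := Phit R k m s n - Phit R k m s ((2 * k).+1 - n).

Lemma frac_bounds (a b : nat) : (0 < a)%N -> (2 * a < b)%N ->
  0 < (a%:R / b%:R : R) < 1/2.
Proof.
move=> a0 ab; have b0 : (0 < b)%N by lia.
have hb : (0 : R) < b%:R by rewrite ltr0n.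
apply/andP; split; first by rewrite divr_gt0 // ltr0n.
rewrite ltr_pdivrMr //.
have : ((2 * a)%:R : R) < b%:R by rewrite ltr_nat.
rewrite natrM; lra.
Qed.

Lemma E_D k m s n : (0 < m)%N -> (0 < s < 2 * m)%N -> (0 < n <= k)%N ->
  E k m s n = D (s%:R / (4 * m)%:R) (n%:R / (2 * k + 1)%:R).
Proof.
move=> m0 /andP[s0 s1] /andP[n0 n1].
have /andP[y0 y1] := @frac_bounds s (4 * m) s0 ltac:(lia).
have /andP[x0 x1] := @frac_bounds n (2 * k + 1) n0 ltac:(lia).
have hN : ((2 * k).+1 - n)%:R / (2 * k + 1)%:R = 1 - n%:R / (2 * k + 1)%:R :> R.
  rewrite natrB; last lia.
  rewrite mulrBl -addn1 divff // pnatr_eq0; lia.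
rewrite /E /D !Phit_eq /Xt ?hN //; apply/andP; split; lra.
Qed.

Lemma E_sym k m s n : (0 < m)%N -> (0 < s < 2 * m)%N -> (0 < n <= k)%N ->
  E k m s n = E k m (2 * m - s) n.
Proof.
move=> m0 hs hn; rewrite !E_D //; last lia.
have /andP[x0 x1] := @frac_bounds n (2 * k + 1) ltac:(lia) ltac:(lia).
have /andP[y0 y1] := @frac_bounds s (4 * m) ltac:(lia) ltac:(lia).
rewrite D_sym ?x0 ?y0 //; congr D.
rewrite natrB; last lia.
have hm : (m%:R : R) != 0 by rewrite pnatr_eq0; lia.
rewrite !natrM; field; exact: hm.
Qed.
End S.

Local Close Scope ring_scope.

Theorem lemma3p17 (R : realType) (k m : nat)
  (hkm : (m < k)%N) (hk : ~~ odd k)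
  (hab : ((2 * k + 1)%:R / (4 * m)%:R < 1 :> R)%R)
  (hmpos : (0 < m)%N)
  (hgcd : gcdn (4 * m) (2 * k + 1) = 1%N) :
  (\rank (At R k m) <= k.-1)%N.
Proof.
pose B : 'M[R]_(m, k) := (\matrix_(i < m, j < k) E R k m i.+1 j.+1)%R.
have fP : forall i : 'I_((2 * m).-1), (minn i (2 * m - 2 - i) < m)%N.
  by move=> i; have := ltn_ord i; lia.
pose f i := Ordinal (fP i).
have sub : (At R k m <= B)%MS.
  apply/row_subP => i.
  have -> : row i (At R k m) = row (f i) B.
    apply/rowP => j; rewrite !mxE /=.
    have hi := ltn_ord i; have hj := ltn_ord j.
    case: (ltnP i m) => him.
      by rewrite (_ : minn i (2 * m - 2 - i) = i) //; lia.
    rewrite (_ : (minn i (2 * m - 2 - i)).+1 = 2 * m - i.+1); last lia.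
    rewrite -E_sym //; lia.
  exact: row_sub.
apply: leq_trans (mxrankS sub) _.
apply: leq_trans (rank_leq_row B) _; lia.
Qed.
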